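(* Let $R$ be an irreducible root system spanning a rational vector space $L$, with Weyl group $W(R)$. Then ${\rm rk}(R)+1\leqslant{\rm sep}(R)\leqslant|W(R)|$.
   Context: For $l\in L^*$ put $l^+=\{x\in L\mid l(x)\geqslant0\}$ and $l^0=\{x\in L\mid l(x)=0\}$. The separation index ${\rm sep}(R)$ is the minimal length $n$ of a sequence $C_1,\ldots,C_n$ of Weyl chambers of $R$ such that for every nonzero $l\in L^*$ there is $i\in[1,n]$ with $\overline{C_i}\subset l^+$ and $\overline{C_i}\cap l^0=\{0\}$ (closures taken in $L$). *)

(* Defs.v *)
(* L = 'rV[rat]_n (a rational vector space of dimension n),
   L^* is identified with 'rV[rat]_n via l(x) = x *m l^T. *)
From HB Require Import structures.
From mathcomp Require Import all_boot all_order all_algebra.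
Set Implicit Arguments. Unset Strict Implicit. Unset Printing Implicit Defensive.
Import Order.TTheory GRing.Theory Num.Theory.
Local Open Scope ring_scope.

Section RootSystems.
Variable n : nat.
Notation vec := 'rV[rat]_n.

Definition pair (x l : vec) : rat := (x *m l^T) 0 0.

(* reflection s_a x = x - a^v(x) a, as a matrix acting on row vectors *)
Definition refl_mx (a av : vec) : 'M[rat]_n := 1%:M - av^T *m a.

(* Bourbaki's definition of a (possibly non-reduced) root system in L,
   with coroot map cor : a |-> a^v in L^*. *)
Definition root_system (R : seq vec) (cor : vec -> vec) : Prop :=
  [/\ 0 \notin R,
      \rank (\matrix_(i < size R) R`_i) = n,
      forall a, a \in R -> pair a (cor a) = 2,
      forall a b, a \in R -> b \in R -> b *m refl_mx a (cor a) \in R &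
      forall a b, a \in R -> b \in R -> exists z : int, pair b (cor a) = z%:~R].

Definition irreducible_rs (R : seq vec) (cor : vec -> vec) : Prop :=
  R != [::] /\
  forall P : vec -> bool,
    (forall a b, a \in R -> b \in R -> P a -> ~~ P b -> pair b (cor a) = 0) ->
    (forall a, a \in R -> P a) \/ (forall a, a \in R -> ~~ P a).

Inductive in_weyl (R : seq vec) (cor : vec -> vec) : 'M[rat]_n -> Prop :=
  | weyl1 : in_weyl R cor 1%:M
  | weylS a w : a \in R -> in_weyl R cor w ->
                in_weyl R cor (w *m refl_mx a (cor a)).

Definition enumerates_weyl (R : seq vec) (cor : vec -> vec) (ws : seq 'M[rat]_n)
  : Prop := uniq ws /\ forall w, in_weyl R cor w <-> w \in ws.

Definition regular (R : seq vec) (cor : vec -> vec) (x0 : vec) : Prop :=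
  forall a, a \in R -> pair x0 (cor a) != 0.

(* Weyl chamber containing a regular point x0: the connected component of
   L minus the union of the hyperplanes ker a^v containing x0, i.e. the open
   cone of points having the same signs as x0 on all coroots *)
Definition chamber (R : seq vec) (cor : vec -> vec) (x0 : vec) : vec -> Prop :=
  fun x => forall a, a \in R -> Num.sg (pair x (cor a)) = Num.sg (pair x0 (cor a)).

Definition closure_L (C : vec -> Prop) : vec -> Prop :=
  fun x => forall e : rat, 0 < e ->
    exists2 y, C y & forall i : 'I_n, `|x 0 i - y 0 i| < e.

(* a sequence of Weyl chambers (given by regular representatives) separating
   all nonzero linear forms *)
Definition separating (R : seq vec) (cor : vec -> vec) (xs : seq vec) : Prop :=
  (forall x0, x0 \in xs -> regular R cor x0) /\
  forall l : vec, l != 0 ->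
    exists2 x0, x0 \in xs &
      (forall x, closure_L (chamber R cor x0) x -> 0 <= pair x l) /\
      (forall x, closure_L (chamber R cor x0) x -> pair x l = 0 -> x = 0).

Definition is_sep (R : seq vec) (cor : vec -> vec) (m : nat) : Prop :=
  (exists2 xs, separating R cor xs & size xs = m) /\
  forall xs, separating R cor xs -> (m <= size xs)%N.

End RootSystems.

(* Main.v *)
Require Import Defs.
From HB Require Import structures.
From mathcomp Require Import all_boot all_order all_algebra.
From Stdlib Require Import Classical.
From mathcomp Require Import ring lra.
Set Implicit Arguments. Unset Strict Implicit. Unset Printing Implicit Defensive.
Import Order.TTheory GRing.Theory Num.Theory.
Local Open Scope ring_scope.
Lemma sg_cases (p : rat) : (0 < p /\ Num.sg p = 1) \/ (p < 0 /\ Num.sg p = -1) \/ (p = 0 /\ Num.sg p = 0).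
Proof.
have [h|h|->] := ltrgtP p 0.
- by right; left; rewrite ltr0_sg.
- by left; rewrite gtr0_sg.
- by right; right; rewrite sgr0.
Qed.

Lemma sg_eq_pos (p q : rat) : q != 0 -> Num.sg p = Num.sg q -> 0 < p * q.
Proof.
move=> /eqP q0.
case: (sg_cases p) => [[hp ->]|[[hp ->]|[hp ->]]];
case: (sg_cases q) => [[hq ->]|[[hq ->]|[hq ->]]] // _; try nra.
Qed.

Lemma pos_sg_eq (p q : rat) : 0 < p * q -> Num.sg p = Num.sg q.
Proof.
case: (sg_cases p) => [[hp ->]|[[hp ->]|[hp ->]]];
case: (sg_cases q) => [[hq ->]|[[hq ->]|[hq ->]]] // ; nra.
Qed.

Lemma sg_small (p d : rat) : `|d| < `|p| -> Num.sg (p + d) = Num.sg p.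
Proof.
move=> h; apply: pos_sg_eq.
case: (sg_cases p) => [[hp _]|[[hp _]|[hp _]]].
- rewrite (gtr0_norm hp) in h; move: h; rewrite ltr_norml => /andP[h1 h2]; nra.
- rewrite (ltr0_norm hp) in h; move: h; rewrite ltr_norml => /andP[h1 h2]; nra.
- by rewrite hp normr0 normr_lt0 in h.
Qed.

Lemma sg_trans_nonneg (p q r : rat) : 0 <= p * q -> r != 0 -> Num.sg q = Num.sg r -> 0 <= p * r.
Proof.
move=> h /eqP r0; case: (sg_cases q) => [[hq ->]|[[hq ->]|[hq ->]]];
case: (sg_cases r) => [[hr ->]|[[hr ->]|[hr ->]]] // _; nra.
Qed.

Lemma argmax (T : eqType) (f : T -> rat) (s : seq T) : s != [::] ->
  exists2 t, t \in s & forall t', t' \in s -> f t' <= f t.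
Proof.
elim: s => [//|x s IH] _; case: (eqVneq s [::]) => [->|sn].
  by exists x; rewrite ?inE ?eqxx // => t'; rewrite inE => /eqP->.
have [t ts ht] := IH sn; have [le|lt] := leP (f x) (f t).
  exists t; first by rewrite inE ts orbT.
  by move=> t'; rewrite inE => /orP[/eqP->|/ht].
exists x; first by rewrite inE eqxx.
by move=> t'; rewrite inE => /orP[/eqP->//|/ht h]; apply: le_trans h (ltW lt).
Qed.
Section Basic.
Variable n : nat.
Notation vec := 'rV[rat]_n.

Lemma pairE (x l : vec) : pair x l = \sum_i x 0 i * l 0 i.
Proof. by rewrite /pair !mxE; apply: eq_bigr => i _; rewrite mxE. Qed.

Lemma pairC (x l : vec) : pair x l = pair l x.
Proof. by rewrite !pairE; apply: eq_bigr => i _; rewrite mulrC. Qed.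

Lemma pairDl (x y l : vec) : pair (x + y) l = pair x l + pair y l.
Proof. by rewrite !pairE -big_split; apply: eq_bigr => i _; rewrite mxE mulrDl. Qed.

Lemma pairZl (k : rat) (x l : vec) : pair (k *: x) l = k * pair x l.
Proof. by rewrite !pairE mulr_sumr; apply: eq_bigr => i _; rewrite mxE mulrA. Qed.

Lemma pairNl (x l : vec) : pair (- x) l = - pair x l.
Proof. by rewrite -scaleN1r pairZl mulN1r. Qed.

Lemma pairBl (x y l : vec) : pair (x - y) l = pair x l - pair y l.
Proof. by rewrite pairDl pairNl. Qed.

Lemma pair0l (l : vec) : pair 0 l = 0.
Proof. by rewrite pairE big1 // => i _; rewrite mxE mul0r. Qed.

Lemma pairDr (x y l : vec) : pair l (x + y) = pair l x + pair l y.
Proof. by rewrite pairC pairDl !(pairC l). Qed.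
Lemma pairZr (k : rat) (x l : vec) : pair l (k *: x) = k * pair l x.
Proof. by rewrite pairC pairZl pairC. Qed.
Lemma pairNr (x l : vec) : pair l (- x) = - pair l x.
Proof. by rewrite pairC pairNl pairC. Qed.
Lemma pairBr (x y l : vec) : pair l (x - y) = pair l x - pair l y.
Proof. by rewrite pairDr pairNr. Qed.
Lemma pair0r (l : vec) : pair l 0 = 0.
Proof. by rewrite pairC pair0l. Qed.

Lemma pair_ge0 (x : vec) : 0 <= pair x x.
Proof. by rewrite pairE; apply: sumr_ge0 => i _; rewrite -expr2 sqr_ge0. Qed.

Lemma pair_eq0 (x : vec) : pair x x = 0 -> x = 0.
Proof.
rewrite pairE => /eqP; rewrite psumr_eq0 => [/allP H|i _]; last by rewrite -expr2 sqr_ge0.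
apply/rowP => i; rewrite [RHS]mxE.
by have := H i (mem_index_enum i); rewrite implyTb mulf_eq0 orbb => /eqP.
Qed.

Lemma mulmx_tr11 (x l : vec) : x *m l^T = (pair x l)%:M.
Proof. by rewrite {1}[x *m l^T]mx11_scalar. Qed.

Lemma reflE (x a av : vec) : x *m refl_mx a av = x - pair x av *: a.
Proof.
by rewrite /refl_mx mulmxBr mulmx1 mulmxA mulmx_tr11 mul_scalar_mx.
Qed.

Lemma pair_mulmx (x l : vec) (A : 'M[rat]_n) : pair (x *m A) l = pair x (l *m A^T).
Proof. by rewrite /pair trmx_mul trmxK mulmxA. Qed.

Lemma refl_invol (a av : vec) : pair a av = 2 ->
  refl_mx a av *m refl_mx a av = 1%:M.
Proof.
move=> h; apply/row_matrixP => i; rewrite row_mul row1 rowE !reflE.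
rewrite pairBl pairZl h; apply/rowP => j; rewrite !mxE; ring.
Qed.
End Basic.
Lemma small_mul (b a : rat) : 0 < b -> 0 <= a -> b / (a + 1) * a < b.
Proof.
move=> b0 a0; have t1 : a / (a + 1) < 1 by rewrite ltr_pdivrMr ?mul1r; lra.
rewrite mulrAC -mulrA; set t := a / (a + 1) in t1 *; nra.
Qed.

Section Geom.
Variable n : nat.
Notation vec := 'rV[rat]_n.

Lemma pair_diff_bound (x z c : vec) (e : rat) : (forall i, `|x 0 i - z 0 i| < e) ->
  `|pair x c - pair z c| <= e * \sum_i `|c 0 i|.
Proof.
move=> h; rewrite -pairBl pairE mulr_sumr.
apply: le_trans (ler_norm_sum _ _ _) _; apply: ler_sum => i _.
by rewrite normrM ler_wpM2r // !mxE ltW.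
Qed.

Lemma closure_sign (C : vec -> Prop) (x c : vec) (s0 : rat) : closure_L C x ->
  (forall z, C z -> Num.sg (pair z c) = s0) -> pair x c != 0 -> Num.sg (pair x c) = s0.
Proof.
move=> cl hC nz; set S := \sum_i `|c 0 i|.
have S0 : 0 <= S by apply: sumr_ge0 => i _.
have p0 : 0 < `|pair x c| by rewrite normr_gt0.
have [z Cz hz] := cl (`|pair x c| / (S + 1)) (divr_gt0 p0 (ltr_wpDl S0 ltr01)).
have hb := pair_diff_bound c hz.
have hs : `|pair z c - pair x c| < `|pair x c|.
  by rewrite distrC; apply: le_lt_trans hb _; apply: small_mul.
by rewrite -(hC z Cz) -(sg_small hs) addrC subrK.
Qed.

Lemma perturb (fs : seq vec) (u z : vec) : exists2 e, 0 < e & forall e', 0 < e' <= e ->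
  forall f, f \in fs -> pair u f != 0 -> Num.sg (pair (u + e' *: z) f) = Num.sg (pair u f).
Proof.
elim: fs => [|f fs [e0 e00 IH]]; first by exists 1 => //.
have [uf0|ufn] := eqVneq (pair u f) 0.
  exists e0 => // e' he' g; rewrite inE => /orP[/eqP->|gfs]; first by rewrite uf0 eqxx.
  exact: IH.
set k := `|pair u f| / (`|pair z f| + 1).
have k0 : 0 < k by rewrite divr_gt0 ?normr_gt0 // ltr_wpDl.
exists (Order.min e0 k); first by rewrite lt_min e00 k0.
move=> e' /andP[e'0]; rewrite le_min => /andP[e'e0 e'k] g; rewrite inE => /orP[/eqP->|gfs]; last first.
  by apply: IH => //; rewrite e'0.
move=> _; rewrite pairDl pairZl; apply: sg_small.
rewrite normrM (gtr0_norm e'0).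
apply: (le_lt_trans _ (small_mul (b := `|pair u f|) (a := `|pair z f|) _ _)).
- by rewrite ler_wpM2r.
- by rewrite normr_gt0.
- exact: normr_ge0.
Qed.
End Geom.
Lemma filter_prop (T : eqType) (P : T -> Prop) (s : seq T) :
  exists s', uniq s' /\ forall x, x \in s' <-> (x \in s /\ P x).
Proof.
elim: s => [|x s [s' [us' H]]]; first by exists [::]; split=> // y; split=> [//|[]].
have [[Px xs']|nP] := classic (P x /\ x \notin s').
  exists (x :: s'); split; first by rewrite /= xs'.
  move=> y; rewrite inE; split.
    case/orP=> [/eqP->|/H [ys Py]]; first by rewrite inE eqxx.
    by rewrite inE ys orbT.
  by rewrite inE; case=> /orP[/eqP->|ys] Py; [rewrite eqxx|apply/orP; right; apply/H].
exists s'; split=> // y; split; first by case/H=> ys Py; rewrite inE ys orbT.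
rewrite inE; case=> /orP[/eqP->|ys] Py; last by apply/H.
by apply/negPn/negP=> h; apply: nP; split.
Qed.

Section Weyl.
Variable n : nat.
Notation vec := 'rV[rat]_n.
Variable R : seq vec.
Variable cor : vec -> vec.
Hypothesis rs : root_system R cor.

Notation s a := (refl_mx a (cor a)).
Notation M := (\matrix_(i < size R) R`_i).

Lemma rs_0 : 0 \notin R. Proof. by case: rs. Qed.
Lemma rs_full : row_full M. Proof. by case: rs => _ h _ _ _; rewrite /row_full h. Qed.
Lemma rs_2 a : a \in R -> pair a (cor a) = 2. Proof. by case: rs => _ _ h _ _; apply: h. Qed.
Lemma rs_refl a b : a \in R -> b \in R -> b *m s a \in R.
Proof. by case: rs => _ _ _ h _; apply: h. Qed.

Lemma s_invol a : a \in R -> s a *m s a = 1%:M.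
Proof. by move=> aR; apply: refl_invol; apply: rs_2. Qed.

Lemma weyl_R w : in_weyl R cor w -> forall a, a \in R -> a *m w \in R.
Proof.
elim=> [|b w' bR _ IH] a aR; first by rewrite mulmx1.
by rewrite mulmxA; apply: rs_refl => //; apply: IH.
Qed.

Lemma weyl_left b w : b \in R -> in_weyl R cor w -> in_weyl R cor (s b *m w).
Proof.
move=> bR; elim=> [|a w' aR _ IH].
  by rewrite mulmx1 -[s b]mul1mx; apply: weylS => //; apply: weyl1.
by rewrite mulmxA; apply: weylS.
Qed.

Lemma weyl_enum : exists ws, enumerates_weyl R cor ws.
Proof.
have [Bl BlM] := row_fullP rs_full.
pose cands := [seq Bl *m \matrix_(i < size R) R`_(f i) | f : {ffun 'I_(size R) -> 'I_(size R)}].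
have [ws [uws Hws]] := filter_prop (in_weyl R cor) cands.
exists ws; split=> // w; rewrite Hws; split; last by case.
move=> Ww; split=> //.
have Hi (i : 'I_(size R)) : (index (R`_i *m w) R < size R)%N.
  by rewrite index_mem; apply: weyl_R => //; apply: mem_nth.
apply/imageP; exists [ffun i => Ordinal (Hi i)] => //.
have -> : \matrix_(i < size R) R`_([ffun i => Ordinal (Hi i)] i) = M *m w.
  apply/row_matrixP => i; rewrite row_mul !rowK ffunE /= nth_index //.
  by apply: weyl_R => //; apply: mem_nth.
by rewrite mulmxA BlM mul1mx.
Qed.

End Weyl.
Section Form.
Variable n : nat.
Notation vec := 'rV[rat]_n.
Variable R : seq vec.
Variable cor : vec -> vec.
Hypothesis rs : root_system R cor.
Variable ws : seq 'M[rat]_n.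
Hypothesis ews : enumerates_weyl R cor ws.
Notation s a := (refl_mx a (cor a)).

Definition Gm := \sum_(w <- ws) w *m w^T.
Definition Bf (x z : vec) := pair (x *m Gm) z.

Lemma BfE x z : Bf x z = \sum_(w <- ws) pair (x *m w) (z *m w).
Proof.
rewrite /Bf /pair /Gm mulmx_sumr mulmx_suml summxE.
by apply: eq_bigr => w _; rewrite trmx_mul !mulmxA.
Qed.

Lemma BfC x z : Bf x z = Bf z x.
Proof. by rewrite !BfE; apply: eq_bigr => w _; rewrite pairC. Qed.

Lemma BfDl x y z : Bf (x + y) z = Bf x z + Bf y z.
Proof. by rewrite !BfE -big_split; apply: eq_bigr => w _; rewrite mulmxDl pairDl. Qed.
Lemma BfZl k x z : Bf (k *: x) z = k * Bf x z.
Proof. by rewrite !BfE mulr_sumr; apply: eq_bigr => w _; rewrite -scalemxAl pairZl. Qed.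
Lemma BfNl x z : Bf (- x) z = - Bf x z.
Proof. by rewrite -scaleN1r BfZl mulN1r. Qed.
Lemma BfBl x y z : Bf (x - y) z = Bf x z - Bf y z.
Proof. by rewrite BfDl BfNl. Qed.
Lemma Bf0l z : Bf 0 z = 0.
Proof. by rewrite /Bf mul0mx pair0l. Qed.
Lemma BfDr x y z : Bf z (x + y) = Bf z x + Bf z y.
Proof. by rewrite BfC BfDl !(BfC z). Qed.
Lemma BfZr k x z : Bf z (k *: x) = k * Bf z x.
Proof. by rewrite BfC BfZl BfC. Qed.
Lemma BfNr x z : Bf z (- x) = - Bf z x.
Proof. by rewrite BfC BfNl BfC. Qed.
Lemma BfBr x y z : Bf z (x - y) = Bf z x - Bf z y.
Proof. by rewrite BfDr BfNr. Qed.
Lemma Bf0r z : Bf z 0 = 0.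
Proof. by rewrite BfC Bf0l. Qed.

Lemma one_ws : (1%:M : 'M[rat]_n) \in ws.
Proof. by case: ews => _ h; apply/h; apply: weyl1. Qed.

Lemma Bf_ge0 x : 0 <= Bf x x.
Proof. by rewrite BfE; apply: sumr_ge0 => w _; apply: pair_ge0. Qed.

Lemma Bf_eq0 x : Bf x x = 0 -> x = 0.
Proof.
rewrite BfE (big_rem _ one_ws) /= mulmx1 => /eqP; rewrite paddr_eq0; first last.
- by apply: sumr_ge0 => w _; apply: pair_ge0.
- by apply: pair_ge0.
by case/andP=> /eqP /pair_eq0.
Qed.

Lemma Bf_gt0 x : x != 0 -> 0 < Bf x x.
Proof. by move=> nx; rewrite lt_def Bf_ge0 andbT; apply/eqP=> /Bf_eq0; apply/eqP. Qed.

Lemma Bf_inv b x z : b \in R -> Bf (x *m s b) (z *m s b) = Bf x z.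
Proof.
move=> bR; rewrite !BfE.
have inj : injective (fun w : 'M[rat]_n => s b *m w).
  by move=> w1 w2 /(congr1 (mulmx (s b))); rewrite !mulmxA (s_invol rs bR) !mul1mx.
have pe : perm_eq ws (map (fun w => s b *m w) ws).
  case: ews => uws Hws; apply: uniq_perm => //; first by rewrite map_inj_uniq.
  move=> w; apply/idP/idP.
    move=> ww; apply/mapP; exists (s b *m w); last by rewrite mulmxA (s_invol rs bR) mul1mx.
    by apply/Hws; apply: weyl_left => //; apply/Hws.
  by case/mapP=> w' w'w ->; apply/Hws; apply: weyl_left => //; apply/Hws.
by rewrite [RHS](perm_big _ pe) big_map; apply: eq_bigr => w _; rewrite !mulmxA.
Qed.

Lemma corB a x : a \in R -> pair x (cor a) * Bf a a = 2 * Bf a x.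
Proof.
move=> aR; have := Bf_inv a x aR; rewrite !reflE (rs_2 rs aR).
rewrite BfBl !BfBr !BfZl !BfZr BfC => h.
set c := pair x (cor a) * Bf a a in h *.
lra.
Qed.


Hypothesis irr : irreducible_rs R cor.

Lemma span_zero (f : vec -> rat) k (A : 'M[rat]_(k, n)) :
  (forall x y, f (x + y) = f x + f y) -> (forall c x, f (c *: x) = c * f x) ->
  (forall i, f (row i A) = 0) -> forall z, (z <= A)%MS -> f z = 0.
Proof.
move=> fD fZ fA z /submxP[D ->]; rewrite mulmx_sum_row.
have f0 : f 0 = 0 by have := fZ 0 0; rewrite scale0r mul0r.
apply: (big_ind (fun v => f v = 0)) => //; first by move=> u v; rewrite fD => -> ->; rewrite addr0.
by move=> i _; rewrite fZ fA mulr0.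
Qed.

Lemma R_full (z : vec) : (z <= \matrix_(i < size R) R`_i)%MS.
Proof. exact: submx_full (rs_full rs). Qed.

Lemma R_zero (f : vec -> rat) :
  (forall x y, f (x + y) = f x + f y) -> (forall c x, f (c *: x) = c * f x) ->
  (forall a, a \in R -> f a = 0) -> forall z, f z = 0.
Proof.
move=> fD fZ fR z; apply: (span_zero fD fZ) (R_full z) => i.
by rewrite rowK; apply: fR; apply: mem_nth.
Qed.

Lemma cor_form (F : vec -> vec -> rat) :
  (forall x z, F x z = F z x) ->
  (forall x y z, F (x + y) z = F x z + F y z) ->
  (forall k x z, F (k *: x) z = k * F x z) ->
  (forall b x z, b \in R -> F (x *m s b) (z *m s b) = F x z) ->
  forall a x, a \in R -> pair x (cor a) * F a a = 2 * F a x.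
Proof.
move=> FC FD FZ Finv a x aR.
have FN x' z : F (- x') z = - F x' z by rewrite -scaleN1r FZ mulN1r.
have FB x' y z : F (x' - y) z = F x' z - F y z by rewrite FD FN.
have FBr x' y z : F z (x' - y) = F z x' - F z y by rewrite FC FB !(FC z).
have FZr k x' z : F z (k *: x') = k * F z x' by rewrite FC FZ FC.
have := Finv a a x aR; rewrite !reflE (rs_2 rs aR).
rewrite FB !FBr !FZ !FZr => h.
set c := pair x (cor a) * F a a in h *.
lra.
Qed.

Definition B2 (x z : vec) := \sum_(a <- undup R) Bf a x * Bf a z / Bf a a.

Lemma B2C x z : B2 x z = B2 z x.
Proof. by apply: eq_bigr => a _; rewrite (mulrC (Bf a x)). Qed.
Lemma B2Dl x y z : B2 (x + y) z = B2 x z + B2 y z.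
Proof. by rewrite /B2 -big_split; apply: eq_bigr => a _ /=; rewrite BfDr; ring. Qed.
Lemma B2Zl k x z : B2 (k *: x) z = k * B2 x z.
Proof. by rewrite /B2 mulr_sumr; apply: eq_bigr => a _ /=; rewrite BfZr; ring. Qed.

Lemma Bf_refl_r a x b : b \in R -> Bf a (x *m s b) = Bf (a *m s b) x.
Proof.
move=> bR; rewrite -(@Bf_inv b (a *m s b) x bR) -mulmxA (s_invol rs bR) mulmx1 //.
Qed.

Lemma B2_inv b x z : b \in R -> B2 (x *m s b) (z *m s b) = B2 x z.
Proof.
move=> bR; rewrite /B2.
have -> : \sum_(a <- undup R) Bf a (x *m s b) * Bf a (z *m s b) / Bf a a =
   \sum_(a <- undup R) (fun c => Bf c x * Bf c z / Bf c c) (a *m s b).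
  by apply: eq_bigr => a _ /=; rewrite !Bf_refl_r // -mulmxA (s_invol rs bR) mulmx1.
rewrite -(big_map (fun a => a *m s b) xpredT (fun c => Bf c x * Bf c z / Bf c c)).
apply: perm_big; apply: uniq_perm.
- rewrite map_inj_uniq ?undup_uniq //.
  by move=> u v /(congr1 (mulmx^~ (s b))); rewrite -!mulmxA (s_invol rs bR) !mulmx1.
- exact: undup_uniq.
move=> c; rewrite mem_undup; apply/mapP/idP.
  by case=> a; rewrite mem_undup => aR ->; apply: rs_refl.
move=> cR; exists (c *m s b); first by rewrite mem_undup; apply: rs_refl.
by rewrite -mulmxA (s_invol rs bR) mulmx1.
Qed.

Lemma Bf_aa_neq0 a : a \in R -> Bf a a != 0.
Proof.
move=> aR; rewrite gt_eqF // Bf_gt0 //; apply/eqP=> a0; move: aR; rewrite a0.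
by move/negP: (rs_0 rs).
Qed.

Definition lam a := B2 a a / Bf a a.

Lemma B2_lam a x : a \in R -> B2 a x = lam a * Bf a x.
Proof.
move=> aR; have h1 := cor_form BfC BfDl BfZl Bf_inv x aR.
have h2 := cor_form B2C B2Dl B2Zl B2_inv x aR.
have nz := Bf_aa_neq0 aR.
have e1 : Bf a x = pair x (cor a) * Bf a a / 2 by rewrite h1; field.
have e2 : B2 a x = pair x (cor a) * B2 a a / 2 by rewrite h2; field.
by rewrite /lam e1 e2; field.
Qed.
Lemma R_ex : exists a0, a0 \in R.
Proof. by case: irr; case: R => [//|a r] _ _; exists a; rewrite inE eqxx. Qed.

Lemma Bf_orth a b : a \in R -> b \in R -> lam a != lam b -> Bf a b = 0.
Proof.
move=> aR bR ne; have h1 := B2_lam b aR; have h2 := B2_lam a bR.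
rewrite B2C h2 BfC in h1.
have : (lam a - lam b) * Bf a b = 0 by rewrite mulrBl h1 subrr.
by move/eqP; rewrite mulf_eq0 subr_eq0 (negbTE ne) /= => /eqP.
Qed.

Lemma lam_const : exists2 lm, 0 < lm & forall a, a \in R -> lam a = lm.
Proof.
have [a0 a0R] := R_ex; case: irr => _ Hirr.
have hyp : forall a b, a \in R -> b \in R -> lam a == lam a0 -> ~~ (lam b == lam a0) ->
    pair b (cor a) = 0.
  move=> a b aR bR /eqP Pa nPb.
  have ne : lam a != lam b by rewrite Pa eq_sym.
  have := corB b aR; rewrite (Bf_orth aR bR ne) mulr0 => /eqP.
  by rewrite mulf_eq0 (negbTE (Bf_aa_neq0 aR)) orbF => /eqP.
have [H|H] := Hirr (fun c => lam c == lam a0) hyp.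
- exists (lam a0); last by move=> a /H /eqP.
  have a00 : a0 != 0 by apply/eqP=> e; move: a0R; rewrite e; move/negP: (rs_0 rs).
  rewrite /lam; apply: divr_gt0; last exact: Bf_gt0.
  have a0u : a0 \in undup R by rewrite mem_undup.
  rewrite /B2 (big_rem _ a0u) /= -mulrA mulfV ?Bf_aa_neq0 // mulr1.
  apply: ltr_pwDl; first exact: Bf_gt0.
  apply: sumr_ge0 => c _; apply: divr_ge0; last exact: Bf_ge0.
  by rewrite -expr2 sqr_ge0.
- by have := H a0 a0R; rewrite eqxx.
Qed.

Lemma Gm_unit : Gm \in unitmx.
Proof.
rewrite -row_free_unit; apply: inj_row_free => v hv.
by apply: Bf_eq0; rewrite /Bf hv pair0l.
Qed.

Lemma key_id : exists2 lm, 0 < lm & forall (l x : vec),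
  lm * pair x l = \sum_(a <- undup R) pair x (cor a) * pair a l / 2.
Proof.
have [lm lm0 Hlm] := lam_const; exists lm => // l x.
have B2E z y : B2 z y = lm * Bf z y.
  apply/eqP; rewrite -subr_eq0; apply/eqP; move: z.
  apply: (R_zero (f := fun z => B2 z y - lm * Bf z y)).
  - by move=> u w; rewrite B2Dl BfDl; ring.
  - by move=> k u; rewrite B2Zl BfZl; ring.
  - by move=> a aR; rewrite B2_lam // Hlm // subrr.
pose v : vec := (invmx Gm *m l^T)^T.
have hv y : Bf y v = pair y l.
  by rewrite /Bf /pair trmxK !mulmxA -(mulmxA y) mulmxV ?Gm_unit // mulmx1.
rewrite -hv -B2E /B2 big_seq [RHS]big_seq; apply: eq_bigr => a.
rewrite mem_undup => aR; rewrite hv.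
have h := corB x aR; have nz := Bf_aa_neq0 aR.
have -> : Bf a x = pair x (cor a) * Bf a a / 2 by rewrite h; field.
by field.
Qed.
Lemma closure_chamber y x a : closure_L (chamber R cor y) x -> a \in R ->
  0 <= pair x (cor a) * pair y (cor a).
Proof.
move=> cl aR; have [->|nz] := eqVneq (pair x (cor a)) 0; first by rewrite mul0r.
have e := closure_sign cl (fun z cz => cz a aR) nz.
have [->|ny] := eqVneq (pair y (cor a)) 0; first by rewrite mulr0.
exact: ltW (sg_eq_pos ny e).
Qed.

Lemma cor_nz a : a \in R -> cor a != 0.
Proof. by move=> aR; apply/eqP=> e; have := rs_2 rs aR; rewrite e pair0r. Qed.

Lemma regular_ex : exists u, regular R cor u.
Proof.
suff : forall fs : seq vec, (forall f, f \in fs -> f != 0) -> exists u, forall f, f \in fs -> pair u f != 0.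
  case/(_ (map cor R)) => [f /mapP[a aR ->]|u hu]; first exact: cor_nz.
  by exists u => a aR; apply: hu; apply: map_f.
elim=> [|f fs IH] hnz; first by exists 0.
have [u hu] : exists u, forall g, g \in fs -> pair u g != 0.
  by apply: IH => g gs; apply: hnz; rewrite inE gs orbT.
have [uf|uf] := eqVneq (pair u f) 0; last first.
  by exists u => g; rewrite inE => /orP[/eqP->//|/hu].
have [e e0 he] := perturb fs u f.
exists (u + e *: f) => g; rewrite inE => /orP[/eqP->|gs].
  rewrite pairDl uf add0r pairZl mulf_neq0 ?(gt_eqF e0) //.
  by apply/eqP=> /pair_eq0 /eqP; apply/negP; apply: hnz; rewrite inE eqxx.
rewrite -sgr_cp0 he ?e0 ?lexx // ?sgr_cp0; exact: hu.
Qed.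

Lemma pair_cor_Bf a x : a \in R -> pair x (cor a) = 2 * Bf a x / Bf a a.
Proof. by move=> aR; rewrite -corB //; field; apply: Bf_aa_neq0. Qed.

Lemma reg_refl z b : regular R cor z -> b \in R -> regular R cor (z *m s b).
Proof.
move=> rz bR a aR; rewrite pair_cor_Bf // Bf_refl_r //.
have abR : a *m s b \in R by apply: rs_refl.
have := rz _ abR; rewrite pair_cor_Bf //.
move=> h; have hz : Bf (a *m s b) z != 0.
  by move: h; apply: contra => /eqP ->; rewrite mulr0 mul0r.
by rewrite !mulf_neq0 // ?invr_neq0 ?Bf_aa_neq0.
Qed.

Lemma reg_weyl x w : regular R cor x -> in_weyl R cor w -> regular R cor (x *m w).
Proof.
move=> rx; elim=> [|b w' bR _ IH]; first by rewrite mulmx1.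
by rewrite mulmxA; apply: reg_refl.
Qed.

Lemma ws_nil : ws != [::].
Proof. by apply/eqP=> e; have := one_ws; rewrite e. Qed.

Lemma transitive x0 y : regular R cor x0 -> regular R cor y ->
  exists2 w, w \in ws & forall a, a \in R ->
    Num.sg (pair (x0 *m w) (cor a)) = Num.sg (pair y (cor a)).
Proof.
move=> rx0 ry; have [w ww hw] := argmax (fun w => Bf (x0 *m w) y) ws_nil.
exists w => // a aR.
have [uws Hws] := ews.
have wa : w *m s a \in ws by apply/Hws; apply: weylS => //; apply/Hws.
have := hw _ wa; rewrite /= mulmxA reflE BfBl BfZl.
have rxw : regular R cor (x0 *m w) by apply: reg_weyl => //; apply/Hws.
have hy := corB y aR; have nz := Bf_aa_neq0 aR.
move=> h; apply: pos_sg_eq.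
have h1 : 0 <= pair (x0 *m w) (cor a) * Bf a y by lra.
have h2 : Bf a y = pair y (cor a) * Bf a a / 2 by rewrite hy; field.
rewrite h2 in h1.
have p1 := rxw a aR; have p2 := ry a aR.
have bpos : 0 < Bf a a by rewrite Bf_gt0 //; apply/eqP=> e; move: aR; rewrite e; move/negP: (rs_0 rs).
set p := pair (x0 *m w) (cor a) in h1 p1 *; set q := pair y (cor a) in h1 p2 *.
have : 0 <= p * q by nra.
rewrite le_eqVlt => /orP[|//]; rewrite eq_sym mulf_eq0 => /orP[] /eqP e.
  by move: p1; rewrite e eqxx.
by move: p2; rewrite e eqxx.
Qed.
Lemma v_ex (l : vec) : exists v, forall z, Bf z v = pair z l.
Proof.
exists ((invmx Gm *m l^T)^T) => y.
by rewrite /Bf /pair trmxK !mulmxA -(mulmxA y) mulmxV ?Gm_unit // mulmx1.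
Qed.

Lemma subB_sub (A B : vec) k (C : 'M[rat]_(k, n)) : (A <= C)%MS -> (B <= C)%MS -> (A - B <= C)%MS.
Proof. by move=> hA hB; apply: addmx_sub => //; rewrite -scaleN1r; apply: scalemx_sub. Qed.

Lemma span_orth (l x : vec) : l != 0 -> (forall a, a \in R -> pair a l != 0 -> Bf a x = 0) -> x = 0.
Proof.
move=> l0 hx.
pose U := \matrix_(i < size R) (if pair R`_i l != 0 then R`_i else 0).
have inU c : c \in R -> pair c l != 0 -> (c <= U)%MS.
  move=> cR cl; have lt : (index c R < size R)%N by rewrite index_mem.
  have <- : row (Ordinal lt) U = c by rewrite rowK /= nth_index // cl.
  exact: row_sub.
have Ux z : (z <= U)%MS -> Bf z x = 0.
  apply: (span_zero (f := fun z => Bf z x)) => [u w|c u|i]; first exact: BfDl.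
    exact: BfZl.
  rewrite rowK; case: ifP => h; last exact: Bf0l.
  by apply: hx => //; apply: mem_nth.
have Ua a : a \in R -> ~~ (a <= U)%MS -> forall b, (b <= U)%MS -> pair b (cor a) = 0.
  move=> aR naU; apply: (span_zero (f := fun z => pair z (cor a))) => [u w|c u|i].
  - exact: pairDl.
  - exact: pairZl.
  rewrite rowK; case: ifP => bl; last exact: pair0l.
  set b := R`_i in bl *; have bR : b \in R by apply: mem_nth.
  have la : pair a l = 0.
    by apply/eqP; apply: contraR naU => al; apply: inU.
  have bsR : b *m s a \in R by apply: rs_refl.
  have bsl : pair (b *m s a) l != 0 by rewrite reflE pairBl pairZl la mulr0 subr0.
  have : (pair b (cor a) *: a <= U)%MS.
    have -> : pair b (cor a) *: a = b - b *m s a by rewrite reflE opprB addrC subrK.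
    by apply: subB_sub; apply: inU.
  have [//|pn] := eqVneq (pair b (cor a)) 0.
  move=> h; have : (a <= U)%MS.
    by rewrite -(scale1r a) -(mulVf pn) -scalerA; apply: scalemx_sub.
  by rewrite (negbTE naU).
case: irr => _ Hirr.
have [H|H] := Hirr (fun a => ~~ (a <= U)%MS) (fun a b aR bR Pa nPb => Ua a aR Pa b (negbNE nPb)).
- case: (boolP (has (fun a => pair a l != 0) R)) => [/hasP [a aR al]|/hasPn H'].
    by have := H a aR; rewrite inU.
  have : forall z, pair z l = 0.
    apply: (R_zero (f := fun z => pair z l)) => [u w|c u|a aR]; first exact: pairDl.
      exact: pairZl.
    by have := H' a aR; rewrite negbK => /eqP.
  by move=> /(_ l) /pair_eq0 /eqP; rewrite (negbTE l0).
- apply: Bf_eq0; apply: Ux; apply: submx_trans (R_full x) _.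
  apply/row_subP => i; rewrite rowK; have := H _ (mem_nth 0 (ltn_ord i)).
  by rewrite negbK.
Qed.
Lemma sep_y (l : vec) : l != 0 -> exists2 y, regular R cor y &
  (forall x, closure_L (chamber R cor y) x -> 0 <= pair x l) /\
  (forall x, closure_L (chamber R cor y) x -> pair x l = 0 -> x = 0).
Proof.
move=> l0; have [lm lm0 Hk] := key_id.
have [v hv] := v_ex l.
have hva a : a \in R -> pair v (cor a) = 2 * pair a l / Bf a a.
  by move=> aR; rewrite pair_cor_Bf // hv.
have [u ru] := regular_ex.
have [e e0 he] := perturb (map cor R) v u.
set y := v + e *: u.
have hy a : a \in R -> pair y (cor a) != 0 /\
    (pair a l != 0 -> Num.sg (pair y (cor a)) = Num.sg (pair a l)).
  move=> aR; have nz := Bf_aa_neq0 aR.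
  have bpos : 0 < Bf a a.
    by rewrite Bf_gt0 //; apply/eqP=> e1; move: aR; rewrite e1; move/negP: (rs_0 rs).
  have [pv|pv] := eqVneq (pair v (cor a)) 0.
    have la : pair a l = 0.
      by move: pv; rewrite hva // => /eqP; rewrite !mulf_eq0 invr_eq0 (negbTE nz) orbF => /orP[//|/eqP].
    split; last by rewrite la eqxx.
    by rewrite /y pairDl pv add0r pairZl mulf_neq0 ?(gt_eqF e0) ?ru.
  have sy : Num.sg (pair y (cor a)) = Num.sg (pair v (cor a)).
    by apply: he; rewrite ?e0 ?lexx // map_f.
  split; first by rewrite -sgr_cp0 sy sgr_cp0.
  move=> la; rewrite sy; apply: pos_sg_eq; rewrite hva //.
  have : 0 < pair a l ^+ 2 by rewrite exprn_even_gt0.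
  have : 0 < (Bf a a)^-1 by rewrite invr_gt0.
  set t := (Bf a a)^-1; set q := pair a l; rewrite expr2; nra.
exists y; first by move=> a aR; case: (hy a aR).
have terms x : closure_L (chamber R cor y) x -> forall a, a \in R ->
    0 <= pair x (cor a) * pair a l / 2.
  move=> cl a aR; apply: divr_ge0 => //.
  have [->|la] := eqVneq (pair a l) 0; first by rewrite mulr0.
  have [_ /(_ la) hs] := hy a aR.
  exact: (sg_trans_nonneg (closure_chamber cl aR) la hs).
have sum0 x : closure_L (chamber R cor y) x -> 0 <= lm * pair x l.
  move=> cl; rewrite Hk big_seq; apply: sumr_ge0 => a; rewrite mem_undup.
  exact: terms.
split=> [x cl|x cl xl].
  by have := sum0 x cl; rewrite pmulr_rge0.
apply: (span_orth l0) => a aR al.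
have := Hk l x; rewrite xl mulr0 big_seq => /esym/eqP.
rewrite psumr_eq0 => [/allP /(_ a)|c]; last first.
  by rewrite mem_undup; apply: terms.
rewrite mem_undup aR => /(_ isT) /implyP /(_ isT) /eqP.
move/eqP; rewrite !mulf_eq0 (negbTE al) orbF invr_eq0 orbF => /eqP px.
have := corB x aR; rewrite px mul0r => /esym/eqP; rewrite mulf_eq0 => /orP[//|/eqP //].
Qed.
Lemma closure_mono (C C' : vec -> Prop) x : (forall z, C z -> C' z) -> closure_L C x -> closure_L C' x.
Proof. by move=> h cl e e0; have [y Cy hy] := cl e e0; exists y => //; apply: h. Qed.

Lemma separating_ws : exists2 xs, separating R cor xs & size xs = size ws.
Proof.
have [x0 rx0] := regular_ex; have [uws Hws] := ews.
exists (map (fun w => x0 *m w) ws); last by rewrite size_map.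
split.
  by move=> z /mapP[w ww ->]; apply: reg_weyl => //; apply/Hws.
move=> l l0; have [y ry [h1 h2]] := sep_y l0.
have [w ww hw] := transitive rx0 ry.
have sub z : chamber R cor (x0 *m w) z -> chamber R cor y z.
  by move=> cz a aR; rewrite cz // hw.
exists (x0 *m w); first by apply: map_f.
by split=> x cl; [apply: h1|apply: h2]; apply: closure_mono cl.
Qed.

Lemma n_pos : (0 < n)%N.
Proof.
have [a0 a0R] := R_ex; case: (posnP n) => [n0|//].
have : a0 = 0 by apply/rowP => i; move: (ltn_ord i); rewrite {2}n0.
by move=> e; move: (rs_0 rs); rewrite -e a0R.
Qed.

Lemma neg_form (r : 'I_n -> vec) : exists l : vec, l != 0 /\ forall i, pair (r i) l <= 0.
Proof.
pose X := \matrix_(i < n) r i.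
have rowX i j : X i j = r i 0 j by rewrite mxE.
have pX (l : vec) i : pair (r i) l = (X *m l^T) i 0.
  by rewrite pairE !mxE; apply: eq_bigr => j _; rewrite !mxE.
case: (boolP (X \in unitmx)) => [Xu|Xnu].
  pose c : 'cV[rat]_n := const_mx (-1).
  exists ((invmx X *m c)^T); split; last first.
    by move=> i; rewrite pX trmxK mulmxA mulmxV // mul1mx mxE lerN10.
  apply/eqP=> e; have : X *m ((invmx X *m c)^T)^T = 0 by rewrite e trmx0 mulmx0.
  rewrite trmxK mulmxA mulmxV // mul1mx => /matrixP /(_ (Ordinal n_pos) 0).
  by rewrite !mxE => /eqP; rewrite oppr_eq0 oner_eq0.
have : kermx X^T != 0 by rewrite kermx_eq0 row_free_unit unitmx_tr.
case: (boolP [exists i, row i (kermx X^T) != 0]) => [/existsP[i ri] _|/existsPn H].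
  exists (row i (kermx X^T)); split=> // j.
  have e : X *m (row i (kermx X^T))^T = (row i (kermx X^T) *m X^T)^T by rewrite trmx_mul trmxK.
  by rewrite pX e -row_mul mulmx_ker row0 trmx0 mxE.
move=> /negP []; apply/eqP/row_matrixP => i; rewrite row0.
by have := H i; rewrite negbK => /eqP.
Qed.

Lemma lower xs : separating R cor xs -> (n < size xs)%N.
Proof.
case=> reg hsep; rewrite ltnNge; apply/negP => hs.
have [l [l0 hl]] := neg_form (fun i => xs`_i).
have [x0 x0s [c1 c2]] := hsep l l0.
have cl : closure_L (chamber R cor x0) x0 by move=> e e0; exists x0 => // i; rewrite subrr normr0.
have le1 := c1 x0 cl.
have le2 : pair x0 l <= 0.
  have lt : (index x0 xs < n)%N by apply: leq_trans hs; rewrite index_mem.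
  by have := hl (Ordinal lt); rewrite /= nth_index.
have := c2 x0 cl (le_anti (introT andP (conj le2 le1))) => x00.
have [a0 a0R] := R_ex; have := reg x0 x0s a0 a0R; by rewrite x00 pair0l eqxx.
Qed.
End Form.

Lemma min_ex (P : nat -> Prop) N : P N -> exists m, P m /\ forall k, P k -> (m <= k)%N.
Proof.
elim/ltn_ind: N => N IH PN.
have [[k [kN Pk]]|nk] := classic (exists k, (k < N)%N /\ P k); first exact: IH Pk.
exists N; split=> // k Pk; rewrite leqNgt; apply/negP => kN; by apply: nk; exists k.
Qed.

(* rk(R) = n = dim L since R spans L = 'rV[rat]_n *)
Theorem lemma5 (n : nat) (R : seq 'rV[rat]_n) (cor : 'rV[rat]_n -> 'rV[rat]_n) :
  root_system R cor -> irreducible_rs R cor ->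
  exists (m : nat) (ws : seq 'M[rat]_n),
    [/\ is_sep R cor m, enumerates_weyl R cor ws & (n.+1 <= m <= size ws)%N].
Proof.
move=> rs irr; have [ws ews] := weyl_enum rs.
have [xs sep sz] := separating_ws rs ews irr.
have [m [[xs' sep' sz'] hmin]] :=
  min_ex (P := fun m => exists2 xs, separating R cor xs & size xs = m) (ex_intro2 _ _ xs sep sz).
exists m, ws; split=> //.
- by split; [exists xs'|move=> ys sy; apply: hmin; exists ys].
- rewrite -sz' (lower rs irr sep') /= sz' -sz; apply: hmin; exists xs => //.
Qed.
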